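(* Let $P>0$ and let $\{\theta_l\}_{l=1}^\infty$ be i.i.d. $\mathrm{Uniform}(0,2\pi)$ random variables. For each integer $i\geq 0$ define $$\bar R(i):=\mathbb{E}\Big[\log\Big(1+\Big|\textstyle\sum_{l=1}^i e^{j\theta_l}\Big|^2P\Big)\Big]$$ (with the empty sum equal to $0$). Then $\bar R(i+1)>\bar R(i)$ for all $i\geq 0$, and $\lim_{i\to\infty}\bar R(i)=\infty$.
   Context: $\log$ is the logarithm in a fixed base. *)

(* Defs.v *)
From Stdlib Require Import Reals List.
From Coquelicot Require Import Coquelicot.
Open Scope R_scope.

Definition ejt (t : R) : C := (cos t, sin t).

Definition phasor_sum (l : list R) : C :=
  fold_right (fun t acc => Cplus (ejt t) acc) (RtoC 0) l.

(* Expectation of f(theta_1,...,theta_n) for theta_1..theta_n i.i.d.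
   Uniform(0, 2 pi): iterated normalized integrals over [0, 2 pi]
   (the product of the uniform laws). *)
Fixpoint unif_avg (n : nat) (f : list R -> R) : R :=
  match n with
  | O => f nil
  | S m => / (2 * PI) * RInt (fun t => unif_avg m (fun l => f (t :: l))) 0 (2 * PI)
  end.

Definition logb (b x : R) : R := ln x / ln b.

Definition Rbar_avg (b P : R) (i : nat) : R :=
  unif_avg i (fun l => logb b (1 + (Cmod (phasor_sum l)) ^ 2 * P)).

(* Main.v *)
Require Import Defs.
From Stdlib Require Import Reals List Lra Lia Psatz FunctionalExtensionality Nsatz ZArith.
From Coquelicot Require Import Coquelicot.
Open Scope R_scope.

Definition cont2 (G : R -> R -> R) := forall x y, continuity_2d_pt G x y.
Definition T (m:nat) (G : R -> R -> R) (x y : R) : R :=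
  unif_avg m (fun l => G (x + fst (phasor_sum l)) (y + snd (phasor_sum l))).
Definition circ (H : R -> R -> R) (x y : R) :=
  / (2*PI) * RInt (fun t => H (x + cos t) (y + sin t)) 0 (2*PI).

Lemma twoPI_pos : 0 < 2 * PI.
Proof. pose proof PI_RGT_0; lra. Qed.

Lemma T0 G : T 0 G = G.
Proof.
  apply functional_extensionality; intro x; apply functional_extensionality; intro y.
  unfold T; simpl. rewrite !Rplus_0_r. reflexivity.
Qed.

Lemma TS m G : T (S m) G = circ (T m G).
Proof.
  apply functional_extensionality; intro x; apply functional_extensionality; intro y.
  unfold T, circ; simpl. f_equal. f_equal.
  apply functional_extensionality; intro t. f_equal.
  apply functional_extensionality; intro l. simpl. rewrite !Rplus_assoc. reflexivity.
Qed.

Lemma exd_cont (f:R->R) x : ex_derive f x -> continuous f x.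
Proof. apply (@ex_derive_continuous R_AbsRing R_NormedModule). Qed.

Lemma ex_RInt_contR (f:R->R) a b : (forall z, Rmin a b <= z <= Rmax a b -> continuous f z) -> ex_RInt f a b.
Proof. apply (@ex_RInt_continuous R_CompleteNormedModule). Qed.

Lemma ex_RInt_scalR (f:R->R) a b k : ex_RInt f a b -> ex_RInt (fun t => k * f t) a b.
Proof. intro H; apply (@ex_RInt_scal R_CompleteNormedModule f a b k H). Qed.
Lemma RInt_scalR (f:R->R) a b k : ex_RInt f a b -> RInt (fun t => k * f t) a b = k * RInt f a b.
Proof. intro H; apply (@RInt_scal R_CompleteNormedModule f a b k H). Qed.
Lemma ex_RInt_plusR (f g:R->R) a b : ex_RInt f a b -> ex_RInt g a b -> ex_RInt (fun t => f t + g t) a b.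
Proof. intros H1 H2; apply (@ex_RInt_plus R_CompleteNormedModule f g a b H1 H2). Qed.
Lemma RInt_plusR (f g:R->R) a b : ex_RInt f a b -> ex_RInt g a b -> RInt (fun t => f t + g t) a b = RInt f a b + RInt g a b.
Proof. intros H1 H2; apply (@RInt_plus R_CompleteNormedModule f g a b H1 H2). Qed.
Lemma RInt_constR a b (k:R) : RInt (fun _ => k) a b = (b - a) * k.
Proof. apply (@RInt_const R_CompleteNormedModule). Qed.

Lemma cont_comp H x y t0 : cont2 H ->
  continuous (fun t => H (x + cos t) (y + sin t)) t0.
Proof.
  intro HH.
  apply (@continuous_comp_2 R_UniformSpace R_UniformSpace R_UniformSpace R_UniformSpace (fun t => x + cos t) (fun t => y + sin t) H).
  - apply exd_cont; auto_derive; auto.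
  - apply exd_cont; auto_derive; auto.
  - apply continuity_2d_pt_filterlim. apply HH.
Qed.

Lemma ex_RInt_comp H x y : cont2 H ->
  ex_RInt (fun t => H (x + cos t) (y + sin t)) 0 (2*PI).
Proof.
  intro HH. apply ex_RInt_contR. intros; apply cont_comp; auto.
Qed.

Lemma RInt_minusR f g a b : ex_RInt f a b -> ex_RInt g a b ->
  RInt (fun x => f x - g x) a b = RInt f a b - RInt g a b.
Proof. intros; apply (RInt_minus f g a b); auto. Qed.

Lemma PC H : cont2 H -> cont2 (fun x y => RInt (fun t => H (x + cos t) (y + sin t)) 0 (2*PI)).
Proof.
  intros HH x0 y0 eps.
  pose proof twoPI_pos as Hpi.
  assert (He : 0 < eps / (2*PI+1)).
  { apply Rdiv_lt_0_compat; [apply cond_pos|lra]. }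
  destruct (uniform_continuity_2d H (x0-2) (x0+2) (y0-2) (y0+2)
     (fun x y _ _ => HH x y) (mkposreal _ He)) as [d Hd].
  assert (Hd1 : 0 < Rmin d 1) by (apply Rmin_pos; [apply cond_pos|lra]).
  exists (mkposreal _ Hd1). intros u v Hu Hv. simpl in Hu, Hv.
  rewrite <- RInt_minusR by (apply ex_RInt_comp; auto).
  apply Rle_lt_trans with ((2*PI - 0) * (eps / (2*PI+1))).
  - apply abs_RInt_le_const; [lra| |].
    + apply ex_RInt_contR. intros z _.
      apply (continuous_minus (fun t => H (u + cos t) (v + sin t)) (fun t => H (x0 + cos t) (y0 + sin t)));
        apply cont_comp; auto.
    + intros t Ht. left.
      pose proof (COS_bound t). pose proof (SIN_bound t).
      pose proof (Rmin_l d 1). pose proof (Rmin_r d 1).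
      apply (Hd (x0 + cos t) (y0 + sin t) (u + cos t) (v + sin t)).
      all: try (apply Rabs_def2 in Hu; apply Rabs_def2 in Hv; lra).
      * replace (u + cos t - (x0 + cos t)) with (u - x0) by ring. lra.
      * replace (v + sin t - (y0 + sin t)) with (v - y0) by ring. lra.
  - destruct eps as [e epos]; simpl.
    rewrite Rminus_0_r. apply Rmult_lt_reg_r with (2*PI+1); [lra|].
    replace (2 * PI * (e / (2 * PI + 1)) * (2 * PI + 1)) with (2*PI*e) by (field; lra). nra.
Qed.

Lemma cont2_const k : cont2 (fun _ _ => k).
Proof. intros x y; apply continuity_2d_pt_const. Qed.

Lemma circ_cont H : cont2 H -> cont2 (circ H).
Proof.
  intros HH x y. unfold circ.
  apply (continuity_2d_pt_mult (fun _ _ => / (2*PI))); [apply continuity_2d_pt_const|].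
  apply PC; auto.
Qed.

Lemma T_cont m G : cont2 G -> cont2 (T m G).
Proof.
  intro HG; induction m.
  - rewrite T0; auto.
  - rewrite TS; apply circ_cont; auto.
Qed.

Lemma T_mono G H : cont2 G -> cont2 H -> (forall x y, G x y <= H x y) ->
  forall m x y, T m G x y <= T m H x y.
Proof.
  intros HG HH Hle m; induction m; intros x y.
  - rewrite !T0; auto.
  - rewrite !TS; unfold circ.
    pose proof twoPI_pos.
    apply Rmult_le_compat_l; [left; apply Rinv_0_lt_compat; lra|].
    apply RInt_le; [lra| apply ex_RInt_comp, T_cont; auto | apply ex_RInt_comp, T_cont; auto |].
    intros; apply IHm.
Qed.

Lemma T_strict G H : cont2 G -> cont2 H -> (forall x y, G x y < H x y) ->
  forall m x y, T m G x y < T m H x y.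
Proof.
  intros HG HH Hle m; induction m; intros x y.
  - rewrite !T0; auto.
  - rewrite !TS; unfold circ.
    pose proof twoPI_pos.
    apply Rmult_lt_compat_l; [apply Rinv_0_lt_compat; lra|].
    apply RInt_lt; [lra| | |].
    + intros; apply cont_comp, T_cont; auto.
    + intros; apply cont_comp, T_cont; auto.
    + intros; apply IHm.
Qed.

Lemma cont2_lin a c G H : cont2 G -> cont2 H -> cont2 (fun x y => a * G x y + c * H x y).
Proof.
  intros HG HH x y.
  apply continuity_2d_pt_plus; apply continuity_2d_pt_mult; auto; apply continuity_2d_pt_const.
Qed.

Lemma T_lin a c G H : cont2 G -> cont2 H ->
  forall m x y, T m (fun x y => a * G x y + c * H x y) x y = a * T m G x y + c * T m H x y.
Proof.
  intros HG HH m; induction m; intros x y.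
  - rewrite !T0; auto.
  - rewrite !TS.
    replace (T m (fun x0 y0 => a * G x0 y0 + c * H x0 y0)) with (fun x0 y0 => a * T m G x0 y0 + c * T m H x0 y0).
    2:{ apply functional_extensionality; intro; apply functional_extensionality; intro; rewrite IHm; auto. }
    unfold circ.
    pose proof (ex_RInt_comp _ x y (T_cont m G HG)).
    pose proof (ex_RInt_comp _ x y (T_cont m H HH)).
    rewrite (RInt_plusR (fun t => a * T m G (x + cos t) (y + sin t)) (fun t => c * T m H (x + cos t) (y + sin t))).
    2,3: apply ex_RInt_scalR; auto.
    rewrite (RInt_scalR (fun t => T m G (x + cos t) (y + sin t))) by auto.
    rewrite (RInt_scalR (fun t => T m H (x + cos t) (y + sin t))) by auto.
    ring.
Qed.

Lemma unif_last : forall i f, unif_avg (S i) f =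
  unif_avg i (fun l => /(2*PI) * RInt (fun t => f (l ++ t :: nil)) 0 (2*PI)).
Proof.
  induction i; intro f.
  - reflexivity.
  - transitivity (/ (2 * PI) * RInt (fun t => unif_avg (S i) (fun l => f (t :: l))) 0 (2 * PI)); [reflexivity|].
    transitivity (/(2*PI) * RInt (fun t1 => unif_avg i (fun l => /(2*PI) * RInt (fun t => f (t1 :: l ++ t :: nil)) 0 (2*PI))) 0 (2*PI)); [|reflexivity].
    f_equal. f_equal. apply functional_extensionality; intro t1.
    rewrite IHi. reflexivity.
Qed.

Lemma phasor_app l t : phasor_sum (l ++ t :: nil) =
  (fst (phasor_sum l) + cos t, snd (phasor_sum l) + sin t).
Proof.
  induction l; simpl.
  - unfold ejt, Cplus; simpl. f_equal; ring.
  - rewrite IHl. unfold Cplus; simpl. f_equal; ring.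
Qed.

Lemma RInt_by_prim (f F : R -> R) a b : (forall t, is_derive F t (f t)) ->
  (forall t, continuous f t) -> RInt f a b = F b - F a.
Proof.
  intros H1 H2. apply is_RInt_unique.
  apply (@is_RInt_derive R_CompleteNormedModule); intros; auto.
Qed.

Definition Fb (b P : R) (x y : R) := logb b (1 + (x*x + y*y) * P).

Lemma Rbar_avg_T b P i : Rbar_avg b P i = T i (Fb b P) 0 0.
Proof.
  unfold Rbar_avg, T, Fb. f_equal. apply functional_extensionality; intro l.
  unfold Cmod. rewrite pow2_sqrt.
  - f_equal. f_equal. f_equal. ring.
  - nra.
Qed.

Lemma Rbar_avg_TS b P i : Rbar_avg b P (S i) = T i (circ (Fb b P)) 0 0.
Proof.
  unfold Rbar_avg. rewrite unif_last. unfold T, circ, Fb. f_equal.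
  apply functional_extensionality; intro l. f_equal. f_equal.
  apply functional_extensionality; intro t.
  rewrite phasor_app. unfold Cmod; cbn [fst snd]. rewrite pow2_sqrt.
  - f_equal. f_equal. f_equal. ring.
  - apply Rplus_le_le_0_compat; apply pow2_ge_0.
Qed.

Lemma M1 m x y : T m (fun u v => u*u + v*v) x y = x*x + y*y + INR m.
Proof.
  revert x y; induction m; intros x y.
  - rewrite T0. simpl. ring.
  - rewrite TS. replace (T m (fun u v => u*u + v*v)) with (fun u v => u*u + v*v + INR m).
    2:{ apply functional_extensionality; intro; apply functional_extensionality; intro; rewrite IHm; auto. }
    unfold circ.
    rewrite (RInt_by_prim _ (fun t => (x*x+y*y+1+INR m)*t + 2*x*sin t - 2*y*cos t)).
    + rewrite sin_2PI, cos_2PI, sin_0, cos_0, S_INR. pose proof twoPI_pos. field. lra.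
    + intro t. auto_derive; auto. pose proof (sin2_cos2 t). unfold Rsqr in *. nsatz.
    + intro t. apply exd_cont. auto_derive; auto.
Qed.

Lemma M2 m x y : T m (fun u v => (u*u + v*v)*(u*u+v*v)) x y =
  (x*x + y*y)*(x*x+y*y) + 4 * INR m * (x*x+y*y) + 2 * INR m * INR m - INR m.
Proof.
  revert x y; induction m; intros x y.
  - rewrite T0. simpl. ring.
  - rewrite TS. replace (T m (fun u v => (u*u + v*v)*(u*u+v*v))) with
      (fun u v => (u*u + v*v)*(u*u+v*v) + 4 * INR m * (u*u+v*v) + 2 * INR m * INR m - INR m).
    2:{ apply functional_extensionality; intro; apply functional_extensionality; intro; rewrite IHm; auto. }
    unfold circ.
    set (r := x*x+y*y). set (mm := INR m).
    rewrite (RInt_by_prim _ (fun t => ((r+1)*(r+1) + 4*mm*(r+1) + 2*mm*mm - mm)*t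
        + (4*(r+1)+8*mm)*(x*sin t - y*cos t) + 2*x*x*(t + sin t * cos t)
        + 4*x*y*(sin t * sin t) + 2*y*y*(t - sin t * cos t))).
    + rewrite sin_2PI, cos_2PI, sin_0, cos_0, S_INR. pose proof twoPI_pos. unfold r, mm. field. lra.
    + intro t. auto_derive; auto. pose proof (sin2_cos2 t). unfold Rsqr in *. unfold r. nsatz.
    + intro t. apply exd_cont. auto_derive; auto.
Qed.

Section KL.
Variables a b : R.
Hypothesis hab : a*a + b*b = 1.

Definition cc t := a * cos t + b * sin t.
Definition ss t := a * sin t - b * cos t.
Definition Dd u t := 1 + u*u + 2*u*cc t.
Definition ff u t := ln (Dd u t).
Definition gg u t := (2*u + 2*cc t) / Dd u t.

Lemma cs_id t : cc t * cc t + ss t * ss t = 1.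
Proof. unfold cc, ss. pose proof (sin2_cos2 t). unfold Rsqr in *. nsatz. Qed.

Lemma cc_bound t : cc t * cc t <= 1.
Proof. pose proof (cs_id t). nra. Qed.

Lemma Dpos u t : u*u < 1 -> 0 < Dd u t.
Proof. intro Hu. pose proof (cc_bound t). unfold Dd. nra. Qed.

Lemma one_ucc_pos u t : u*u < 1 -> 0 < 1 + u * cc t.
Proof. intro Hu. pose proof (cc_bound t). nra. Qed.

Lemma der_u u t : u*u < 1 -> is_derive (fun z => ff z t) u (gg u t).
Proof.
  intro Hu. pose proof (Dpos u t Hu). unfold ff, gg, Dd in *.
  auto_derive. lra. field. lra.
Qed.

Lemma Derive_eq u t : u*u < 1 -> Derive (fun z => ff z t) u = gg u t.
Proof. intro Hu. apply is_derive_unique, der_u; auto. Qed.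

Lemma cont2_cos2 : forall u v, continuity_2d_pt (fun _ v => cos v) u v.
Proof.
  intros u v. apply (continuity_1d_2d_pt_comp cos (fun _ v => v)).
  apply continuity_cos. apply continuity_2d_pt_id2.
Qed.
Lemma cont2_sin2 : forall u v, continuity_2d_pt (fun _ v => sin v) u v.
Proof.
  intros u v. apply (continuity_1d_2d_pt_comp sin (fun _ v => v)).
  apply continuity_sin. apply continuity_2d_pt_id2.
Qed.

Lemma cont2_cc u v : continuity_2d_pt (fun _ v => cc v) u v.
Proof.
  unfold cc. apply continuity_2d_pt_plus; apply continuity_2d_pt_mult;
   (apply continuity_2d_pt_const || apply cont2_cos2 || apply cont2_sin2).
Qed.

Lemma cont_gg u t : u*u < 1 -> continuity_2d_pt gg u t.
Proof.
  intro Hu. unfold gg, Rdiv.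
  apply continuity_2d_pt_mult.
  - apply continuity_2d_pt_plus.
    + apply (continuity_2d_pt_mult (fun _ _ => 2)); [apply continuity_2d_pt_const|apply continuity_2d_pt_id1].
    + apply (continuity_2d_pt_mult (fun _ _ => 2)); [apply continuity_2d_pt_const|apply cont2_cc].
  - apply (continuity_2d_pt_inv (fun u v => Dd u v)).
    + unfold Dd. apply continuity_2d_pt_plus.
      * apply continuity_2d_pt_plus; [apply continuity_2d_pt_const|].
        apply continuity_2d_pt_mult; apply continuity_2d_pt_id1.
      * apply continuity_2d_pt_mult; [|apply cont2_cc].
        apply (continuity_2d_pt_mult (fun _ _ => 2)); [apply continuity_2d_pt_const|apply continuity_2d_pt_id1].
    + pose proof (Dpos u t Hu). lra.
Qed.

Lemma ball_R (x e y : R) : ball x e y -> Rabs (y - x) < e.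
Proof. unfold ball; simpl; unfold AbsRing_ball, abs, minus, plus, opp; simpl. auto. Qed.

Lemma loc_in u : u*u < 1 -> locally u (fun y : R => y*y < 1).
Proof.
  intro Hu.
  assert (Hau : Rabs u < 1).
  { destruct (Rcase_abs u); [rewrite Rabs_left|rewrite Rabs_right]; nra. }
  assert (He : 0 < (1 - Rabs u)/2) by lra.
  exists (mkposreal _ He). intros y Hy. apply ball_R in Hy. simpl in Hy.
  revert Hy. generalize (y : R). clear y. intros y Hy.
  assert (Rabs y < 1).
  { pose proof (Rabs_triang (y - u) u).
    replace (y - u + u) with y in * by ring. lra. }
  apply Rabs_def2 in H. nra.
Qed.

Lemma cont_ff u t : u*u < 1 -> continuous (fun t => ff u t) t.
Proof.
  intro Hu. apply exd_cont. pose proof (Dpos u t Hu). unfold ff, Dd, cc in *.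
  auto_derive. lra.
Qed.

Definition Phi u := RInt (fun t => ff u t) 0 (2*PI).

Lemma prim_ok u t : u*u < 1 ->
  is_derive (fun t => if Req_EM_T u 0 then 2 * ss t else 2 / u * atan (u * ss t / (1 + u * cc t))) t (gg u t).
Proof.
  intro Hu. pose proof (Dpos u t Hu) as HD. pose proof (one_ucc_pos u t Hu) as H1.
  destruct (Req_EM_T u 0) as [e|n].
  - subst u. unfold gg, Dd, ss, cc in *. auto_derive; auto. field.
  - assert (Hw : is_derive (fun t => u * ss t / (1 + u * cc t)) t (u * (cc t + u) / ((1 + u * cc t)^2))).
    { pose proof (cs_id t). unfold ss, cc in *. auto_derive. lra.
      field_simplify_eq; [|lra]. transitivity (u^2 * ((a * cos t + b * sin t) * (a * cos t + b * sin t) + (a * sin t - b * cos t) * (a * sin t - b * cos t)) + u*a*cos t + u*b*sin t); [ring | rewrite H; ring]. }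
    pose proof (is_derive_comp atan _ t _ _ (is_derive_atan _) Hw) as Hc.
    pose proof (is_derive_scal _ t (2/u) _ Hc) as Hs.
    eapply is_derive_ext in Hs; [|intro; reflexivity].
    replace (gg u t) with (2 / u * scal (u * (cc t + u) / (1 + u * cc t) ^ 2)
           (/ (1 + (u * ss t / (1 + u * cc t))²))); auto.
    unfold scal; simpl; unfold mult; simpl. unfold gg.
    assert (E : 1 + (u * ss t / (1 + u * cc t))² = Dd u t / (1 + u*cc t)^2).
    { pose proof (cs_id t). unfold Rsqr, Dd. field_simplify_eq; [|lra]. transitivity (u^2 * (cc t * cc t + ss t * ss t) + 2*u*cc t + 1); [ring|rewrite H; ring]. }
    rewrite E. field. repeat split; lra.
Qed.

Lemma loc2_in u : u*u < 1 -> exists d : posreal, forall y, Rabs (y - u) < d -> y*y < 1.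
Proof.
  intro Hu.
  assert (Hau : Rabs u < 1).
  { destruct (Rcase_abs u); [rewrite Rabs_left|rewrite Rabs_right]; nra. }
  assert (He : 0 < (1 - Rabs u)/2) by lra.
  exists (mkposreal _ He). intros y Hy. simpl in Hy.
  assert (Rabs y < 1).
  { pose proof (Rabs_triang (y - u) u).
    replace (y - u + u) with y in * by ring. lra. }
  apply Rabs_def2 in H. nra.
Qed.

Lemma cont_gg1 u t : u*u < 1 -> continuous (gg u) t.
Proof.
  intro Hu. apply exd_cont. pose proof (Dpos u t Hu). unfold gg, Dd, cc in *.
  auto_derive. lra.
Qed.

Lemma Phi_der u : u*u < 1 -> is_derive Phi u 0.
Proof.
  intro Hu.
  assert (V : RInt (fun t => Derive (fun z => ff z t) u) 0 (2*PI) = 0).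
  { rewrite (RInt_ext _ (gg u)).
    2:{ intros; apply Derive_eq; auto. }
    rewrite (RInt_by_prim (gg u) (fun t => if Req_EM_T u 0 then 2 * ss t else 2 / u * atan (u * ss t / (1 + u * cc t)))).
    - destruct (Req_EM_T u 0); unfold ss, cc; rewrite sin_2PI, cos_2PI, sin_0, cos_0; lra.
    - intro t; apply prim_ok; auto.
    - intro t; apply cont_gg1; auto. }
  rewrite <- V. unfold Phi.
  apply (is_derive_RInt_param ff 0 (2*PI) u).
  - apply filter_imp with (2 := loc_in u Hu). intros y Hy t _. eexists; apply der_u; auto.
  - intros t _. apply continuity_2d_pt_ext_loc with gg; [|apply cont_gg; auto].
    destruct (loc2_in u Hu) as [d Hd]. exists d. intros u' v H1 _.
    symmetry; apply Derive_eq; auto.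
  - apply filter_imp with (2 := loc_in u Hu). intros y Hy.
    apply ex_RInt_contR; intros; apply cont_ff; auto.
Qed.

Lemma Phi_zero rho : rho*rho < 1 -> Phi rho = 0.
Proof.
  intro Hr.
  destruct (MVT_gen Phi 0 rho (fun _ => 0)) as [c [_ Hc]].
  - intros x Hx. apply Phi_der.
    destruct (Rle_dec 0 rho).
    + rewrite Rmin_left, Rmax_right in Hx by lra. nra.
    + rewrite Rmin_right, Rmax_left in Hx by lra. nra.
  - intros x Hx. apply continuity_pt_filterlim. apply exd_cont. eexists; apply Phi_der.
    destruct (Rle_dec 0 rho).
    + rewrite Rmin_left, Rmax_right in Hx by lra. nra.
    + rewrite Rmin_right, Rmax_left in Hx by lra. nra.
  - assert (P0 : Phi 0 = 0).
    { unfold Phi, ff, Dd. rewrite (RInt_ext _ (fun _ => 0)).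
      - rewrite RInt_constR; apply Rmult_0_r.
      - intros; replace (1 + 0*0 + 2*0*cc x) with 1 by ring; apply ln_1. }
    lra.
Qed.
End KL.

Lemma alg_facts (P r sr A Dq : R) : 0 < P -> 0 < sr -> sr*sr = r -> A = 1 + P*(r+1) ->
  0 <= Dq -> Dq*Dq = A*A - 4*P*P*r ->
  0 <= (A - Dq)/(2*P*sr) /\ (A - Dq)/(2*P*sr) < 1 /\ 1 + P*r < (A+Dq)/2 /\
  (A+Dq)/2 * ((A - Dq)/(2*P*sr)) = P*sr /\
  (A+Dq)/2 * (1 + (A - Dq)/(2*P*sr) * ((A - Dq)/(2*P*sr))) = A.
Proof.
  intros hP hsr hr hA hD hD2. subst r A.
  assert (HA1 : 0 < 1 + P*(sr*sr+1) - 2*P*sr).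
  { pose proof (Rle_0_sqr (sr-1)). unfold Rsqr in *.
    assert (0 <= P*((sr-1)*(sr-1))) by (apply Rmult_le_pos; lra). nra. }
  assert (HA0 : 0 < 1 + P*(sr*sr+1)).
  { pose proof (Rle_0_sqr sr). unfold Rsqr in *. assert (0 <= P*(sr*sr+1)) by (apply Rmult_le_pos; lra). lra. }
  assert (HPs : 0 < P*P*(sr*sr)) by (apply Rmult_lt_0_compat; nra).
  assert (HDA : Dq < 1 + P*(sr*sr+1)).
  { destruct (Rlt_dec Dq (1 + P*(sr*sr+1))) as [|n]; auto.
    assert (1 + P*(sr*sr+1) <= Dq) by lra.
    assert ((1 + P*(sr*sr+1))*(1 + P*(sr*sr+1)) <= Dq*Dq) by (apply Rmult_le_compat; lra).
    lra. }
  assert (HDA2 : 1 + P*(sr*sr+1) - 2*P*sr < Dq).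
  { destruct (Rlt_dec (1 + P*(sr*sr+1) - 2*P*sr) Dq) as [|n]; auto.
    assert (Dq <= 1 + P*(sr*sr+1) - 2*P*sr) by lra.
    assert (Dq*Dq <= (1 + P*(sr*sr+1) - 2*P*sr)*(1 + P*(sr*sr+1) - 2*P*sr)) by (apply Rmult_le_compat; lra).
    assert (0 < P*sr*(1 + P*(sr*sr+1) - 2*P*sr)) by (apply Rmult_lt_0_compat; [apply Rmult_lt_0_compat|]; lra).
    nra. }
  assert (Hps : 0 < 2*P*sr) by nra.
  assert (h1 : (1 + P*(sr*sr+1) + Dq)/2 * ((1 + P*(sr*sr+1) - Dq)/(2*P*sr)) = P*sr).
  { field_simplify_eq; [|lra]. nra. }
  repeat split.
  - apply Rmult_le_pos; [lra|left; apply Rinv_0_lt_compat; lra].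
  - apply (Rmult_lt_reg_r (2*P*sr)); [lra|]. field_simplify; lra.
  - assert (1 + P*(sr*sr) - P < Dq); [|lra].
    destruct (Rlt_dec (1 + P*(sr*sr) - P) 0); [lra|]. nra.
  - exact h1.
  - set (al := (1 + P*(sr*sr+1) + Dq)/2) in *. set (rho := (1 + P*(sr*sr+1) - Dq)/(2*P*sr)) in *.
    replace (al * (1 + rho*rho)) with (al + (al*rho)*rho) by ring. rewrite h1.
    unfold al, rho. field. lra.
Qed.

Lemma base (bb P : R) (hb : 1 < bb) (hP : 0 < P) x y :
  Fb bb P x y < circ (Fb bb P) x y.
Proof.
  assert (Hlb : 0 < ln bb) by (rewrite <- ln_1; apply ln_increasing; lra).
  pose proof twoPI_pos as Hpi.
  unfold circ, Fb, logb.
  set (r := x*x + y*y).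
  assert (Hr : 0 <= r) by (unfold r; nra).
  destruct (Req_dec r 0) as [r0|rpos].
  - assert (x = 0 /\ y = 0) as [-> ->] by (unfold r in r0; split; nra).
    rewrite (RInt_ext _ (fun _ => ln (1 + P) / ln bb)).
    2:{ intros t _. pose proof (sin2_cos2 t). unfold Rsqr in *.
        do 3 f_equal. nra. }
    rewrite RInt_constR.
    rewrite r0, Rmult_0_l, Rplus_0_r, ln_1.
    assert (0 < ln (1+P)) by (rewrite <- ln_1; apply ln_increasing; lra).
    replace (/ (2 * PI) * ((2 * PI - 0) * (ln (1 + P) / ln bb))) with (ln (1 + P) / ln bb) by (field; lra).
    unfold Rdiv. rewrite Rmult_0_l. apply Rmult_lt_0_compat; [auto|apply Rinv_0_lt_compat; auto].
  - assert (Hr' : 0 < r) by lra.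
    set (sr := sqrt r).
    assert (Hsr : 0 < sr) by (apply sqrt_lt_R0; auto).
    assert (Hsr2 : sr * sr = r) by (apply sqrt_sqrt; lra).
    set (a := x / sr). set (b := y / sr).
    assert (Hab : a*a + b*b = 1).
    { unfold a, b. replace (x/sr*(x/sr) + y/sr*(y/sr)) with ((x*x+y*y)/(sr*sr)) by (field; lra). rewrite Hsr2. fold r. field. lra. }
    set (A := 1 + P * (r + 1)).
    assert (HQ : 0 <= A*A - 4*P*P*r).
    { assert (HA0 : 0 < 1 + P*(sr*sr+1)).
      { pose proof (Rle_0_sqr sr). unfold Rsqr in *. assert (0 <= P*(sr*sr+1)) by (apply Rmult_le_pos; lra). lra. }
      assert (0 <= P*((sr-1)*(sr-1))) by (apply Rmult_le_pos; [lra|apply Rle_0_sqr]).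
      replace (A*A - 4*P*P*r) with ((A - 2*P*sr)*(A+2*P*sr)) by (unfold A; rewrite <- Hsr2; ring).
      apply Rmult_le_pos.
      - replace (A - 2*P*sr) with (1 + P*((sr-1)*(sr-1))) by (unfold A; rewrite <- Hsr2; ring). lra.
      - assert (0 <= 2*P*sr) by (apply Rmult_le_pos; lra). unfold A; rewrite <- Hsr2. lra. }
    set (Dq := sqrt (A*A - 4*P*P*r)).
    assert (HDq : 0 <= Dq) by (apply sqrt_pos).
    assert (HDq2 : Dq * Dq = A*A - 4*P*P*r) by (apply sqrt_sqrt; lra).
    destruct (alg_facts P r sr A Dq hP Hsr Hsr2 eq_refl HDq HDq2) as [Hrho0 [Hrho1 [Hal [h1 h2]]]].
    set (al := (A + Dq)/2) in *.
    set (rho := (A - Dq) / (2*P*sr)) in *.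
    assert (Hrr : rho * rho < 1).
    { assert (rho*rho <= rho*1) by (apply Rmult_le_compat_l; lra). lra. }
    assert (Hal0 : 0 < al).
    { assert (0 <= P*r) by (apply Rmult_le_pos; lra). lra. }
    rewrite (RInt_ext _ (fun t => /ln bb * ln al + / ln bb * ff a b rho t)).
    2:{ intros t _. unfold ff, Dd, cc. rewrite <- Rmult_plus_distr_l, <- ln_mult; [|lra|apply (Dpos a b Hab); auto].
        unfold Rdiv. rewrite Rmult_comm. f_equal. f_equal.
        pose proof (sin2_cos2 t). unfold Rsqr in *.
        assert (ex : x = a * sr) by (unfold a; field; lra).
        assert (ey : y = b * sr) by (unfold b; field; lra).
        transitivity (al * (1 + rho*rho) + 2 * (al * rho) * (a * cos t + b * sin t)); [|ring].
        rewrite h1, h2. unfold A. rewrite ex, ey.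
        transitivity (1 + P * (sr*sr*(a*a+b*b) + (sin t * sin t + cos t * cos t) + 2 * sr * (a * cos t + b * sin t))); [ring|].
        rewrite Hab, H, Hsr2. ring. }
    rewrite RInt_plusR.
    2:{ apply ex_RInt_contR; intros. apply (continuous_const (U:=R_UniformSpace) (V:=R_UniformSpace)). }
    2:{ apply ex_RInt_scalR. apply ex_RInt_contR; intros; apply cont_ff; auto. }
    rewrite RInt_constR, RInt_scalR.
    2:{ apply ex_RInt_contR; intros; apply cont_ff; auto. }
    change (RInt (ff a b rho) 0 (2*PI)) with (Phi a b rho).
    rewrite Phi_zero; auto.
    replace (/ (2 * PI) * ((2 * PI - 0) * (/ ln bb * ln al) + / ln bb * 0)) with (ln al / ln bb) by (field; lra).
    unfold Rdiv. apply Rmult_lt_compat_r; [apply Rinv_0_lt_compat; auto|].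
    replace (1 + r*P) with (1 + P*r) by ring.
    apply ln_increasing; [|lra]. assert (0 <= P*r) by (apply Rmult_le_pos; lra). lra.
Qed.

Lemma cont2_X : cont2 (fun u v => u*u + v*v).
Proof.
  intros x y. apply continuity_2d_pt_plus; apply continuity_2d_pt_mult;
   (apply continuity_2d_pt_id1 || apply continuity_2d_pt_id2).
Qed.

Lemma cont2_X2 : cont2 (fun u v => (u*u + v*v)*(u*u+v*v)).
Proof. intros x y. apply continuity_2d_pt_mult; apply cont2_X. Qed.

Lemma cont2_Fb bb P : 0 < P -> cont2 (Fb bb P).
Proof.
  intros hP x y. unfold Fb, logb, Rdiv.
  apply (continuity_2d_pt_mult (fun u v => ln (1 + (u*u+v*v)*P)) (fun _ _ => / ln bb)); [|apply continuity_2d_pt_const].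
  apply (continuity_1d_2d_pt_comp ln (fun u v => 1 + (u*u+v*v)*P)).
  - apply continuity_pt_filterlim. apply exd_cont. auto_derive.
    assert (0 <= (x*x+y*y)*P) by (apply Rmult_le_pos; nra). lra.
  - apply continuity_2d_pt_plus; [apply continuity_2d_pt_const|].
    apply continuity_2d_pt_mult; [apply cont2_X|apply continuity_2d_pt_const].
Qed.

Lemma ln_le_sub1 z : 0 < z -> ln z <= z - 1.
Proof.
  intro hz. rewrite <- (ln_exp (z - 1)). apply ln_le; auto.
  pose proof (exp_ineq1_le (z-1)). lra.
Qed.

Lemma chord (a y : R) : 0 < a -> 0 <= y <= 1 -> y * ln (1 + a) <= ln (1 + a*y).
Proof.
  intros ha hy.
  set (c := 1 + a*y).
  assert (hc : 0 < c) by (unfold c; nra).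
  pose proof (ln_le_sub1 (1/c) ltac:(apply Rdiv_lt_0_compat; lra)) as H1.
  pose proof (ln_le_sub1 ((1+a)/c) ltac:(apply Rdiv_lt_0_compat; lra)) as H2.
  rewrite ln_div in H1, H2 by lra. rewrite ln_1 in H1.
  assert (E : (1 - y) * (1 / c - 1) + y * ((1 + a) / c - 1) = 0) by (unfold c in *; field; lra).
  assert (W1 : (1-y) * (0 - ln c) <= (1-y) * (1/c - 1)) by (apply Rmult_le_compat_l; lra).
  assert (W2 : y * (ln (1+a) - ln c) <= y * ((1+a)/c - 1)) by (apply Rmult_le_compat_l; lra).
  fold c. lra.
Qed.

Lemma lowb_y (P m y : R) : 0 < P -> 0 < m -> 0 <= y ->
  ln (1 + P*m) * (y - y*y/4) <= ln (1 + P*m*y).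
Proof.
  intros hP hm hy.
  assert (hL : 0 < ln (1 + P*m)) by (rewrite <- ln_1; apply ln_increasing; nra).
  assert (hPm : 0 < P*m) by nra.
  destruct (Rle_dec y 1).
  - pose proof (chord (P*m) y hPm ltac:(lra)) as H.
    assert (ln (1 + P*m) * (y*y/4) >= 0) by (apply Rle_ge, Rmult_le_pos; [lra | unfold Rdiv; apply Rmult_le_pos; [apply Rle_0_sqr | lra]]).
    replace (ln (1 + P*m) * (y - y*y/4)) with (y * ln (1 + P*m) - ln (1 + P*m) * (y*y/4)) by ring. lra.
  - assert (ln (1 + P*m) <= ln (1 + P*m*y)).
    { apply ln_le; [lra|]. assert (P*m*1 <= P*m*y) by (apply Rmult_le_compat_l; lra). lra. }
    assert (y - y*y/4 <= 1).
    { assert (0 <= (y-2)*(y-2)) by apply Rle_0_sqr. lra. }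
    assert (ln (1 + P*m) * (y - y*y/4) <= ln (1 + P*m) * 1) by (apply Rmult_le_compat_l; lra).
    lra.
Qed.

Lemma lowb (P m X : R) : 0 < P -> 0 < m -> 0 <= X ->
  ln (1 + P*m) * (X/m - X*X/(4*m*m)) <= ln (1 + X*P).
Proof.
  intros hP hm hX.
  pose proof (lowb_y P m (X/m) hP hm ltac:(apply Rdiv_le_0_compat; lra)) as H.
  replace (X/m - X*X/(4*m*m)) with (X/m - X/m*(X/m)/4) by (field; lra).
  replace (1 + X*P) with (1 + P*m*(X/m)) by (field; lra). exact H.
Qed.

Lemma lower (bb P : R) (hb : 1 < bb) (hP : 0 < P) (n : nat) : (1 <= n)%nat ->
  ln (1 + P * INR n) / (2 * ln bb) <= Rbar_avg bb P n.
Proof.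
  intro hn.
  assert (Hlb : 0 < ln bb) by (rewrite <- ln_1; apply ln_increasing; lra).
  set (m := INR n).
  assert (hm : 0 < m) by (unfold m; apply lt_0_INR; lia).
  set (L := ln (1 + P*m) / ln bb).
  assert (hL : 0 < L).
  { unfold L. apply Rdiv_lt_0_compat; auto. rewrite <- ln_1; apply ln_increasing; nra. }
  set (k1 := L/m). set (k2 := - L/(4*m*m)).
  rewrite Rbar_avg_T.
  pose proof (T_mono (fun u v => k1 * (u*u+v*v) + k2 * ((u*u+v*v)*(u*u+v*v))) (Fb bb P)
     (cont2_lin k1 k2 _ _ cont2_X cont2_X2) (cont2_Fb bb P hP)) as HM.
  assert (HG : forall x y, k1 * (x*x+y*y) + k2 * ((x*x+y*y)*(x*x+y*y)) <= Fb bb P x y).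
  { intros x y. unfold Fb, logb.
    pose proof (lowb P m (x*x+y*y) hP hm ltac:(nra)) as H.
    replace (k1 * (x*x+y*y) + k2 * ((x*x+y*y)*(x*x+y*y))) with
      (ln (1 + P*m) * ((x*x+y*y)/m - (x*x+y*y)*(x*x+y*y)/(4*m*m)) / ln bb)
      by (unfold k1, k2, L; field; lra).
    unfold Rdiv at 1 3. apply Rmult_le_compat_r; [left; apply Rinv_0_lt_compat; auto|]. exact H. }
  specialize (HM HG n 0 0).
  rewrite (T_lin k1 k2 _ _ cont2_X cont2_X2) in HM.
  rewrite M1, M2 in HM. fold m in HM.
  replace (ln (1 + P * m) / (2 * ln bb)) with (L/2) by (unfold L; field; lra).
  assert (E : k1 * (0 * 0 + 0 * 0 + m) + k2 * ((0 * 0 + 0 * 0) * (0 * 0 + 0 * 0) + 4 * m * (0 * 0 + 0 * 0) + 2 * m * m - m)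
     = L/2 + L/(4*m)) by (unfold k1, k2; field; lra).
  rewrite E in HM.
  assert (0 < L/(4*m)) by (apply Rdiv_lt_0_compat; lra).
  lra.
Qed.

Lemma lim_low (bb P : R) (hb : 1 < bb) (hP : 0 < P) :
  is_lim_seq (fun n => ln (1 + P * INR n) / (2 * ln bb)) p_infty.
Proof.
  assert (Hlb : 0 < ln bb) by (rewrite <- ln_1; apply ln_increasing; lra).
  assert (H1 : is_lim_seq (fun n => 1 + P * INR n) p_infty).
  { apply is_lim_seq_spec. intros M. exists (Z.to_nat (up (Rabs M / P))). intros n hn.
    apply le_INR in hn. rewrite INR_IZR_INZ in hn.
    destruct (archimed (Rabs M / P)) as [ha _].
    assert (0 <= Rabs M / P) by (apply Rdiv_le_0_compat; [apply Rabs_pos|lra]).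
    assert (hup : (0 <= up (Rabs M / P))%Z) by (apply le_IZR; lra).
    rewrite Z2Nat.id in hn by auto.
    assert (Rabs M / P < INR n) by lra.
    assert (Rabs M < P * INR n).
    { apply (Rmult_lt_compat_l P) in H0; [|lra]. replace (P * (Rabs M / P)) with (Rabs M) in H0 by (field; lra). lra. }
    pose proof (Rle_abs M). lra. }
  assert (H2 : is_lim_seq (fun n => ln (1 + P * INR n)) p_infty).
  { apply (is_lim_comp_seq ln (fun n => 1 + P * INR n) p_infty p_infty); auto.
    - apply is_lim_ln_p.
    - exists 0%nat; intros; discriminate. }
  apply is_lim_seq_spec. intro M. apply is_lim_seq_spec in H2.
  destruct (H2 (M * (2 * ln bb))) as [N HN]. exists N. intros n hn.
  specialize (HN n hn).
  apply (Rmult_lt_reg_r (2 * ln bb)); [lra|]. unfold Rdiv. rewrite Rmult_assoc, Rinv_l by lra. lra.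
Qed.

Theorem proposition3 (b P : R) (hb : 1 < b) (hP : 0 < P) :
  (forall i : nat, Rbar_avg b P i < Rbar_avg b P (S i)) /\
  is_lim_seq (fun i : nat => Rbar_avg b P i) p_infty.
Proof.
  split.
  - intro i. rewrite Rbar_avg_T, Rbar_avg_TS.
    apply T_strict.
    + apply cont2_Fb; auto.
    + apply circ_cont, cont2_Fb; auto.
    + intros; apply base; auto.
  - apply (is_lim_seq_le_p_loc (fun n => ln (1 + P * INR n) / (2 * ln b))).
    + exists 1%nat. intros n hn. apply lower; auto.
    + apply lim_low; auto.
Qed.
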